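(* For $n\ge1$, let $X_n$ be the set of planar rooted trees with $n$ leaves having no vertices with exactly one or exactly two inputs, in which every vertex with $k$ inputs is labelled by an element of $\{1,\dots,k-2\}$. Then $\#X_n=F_{n-1}$, where the Fine numbers $F_k$ are defined by $\sum_{n\ge1}F_{n-1}x^n=\frac{1+2x-\sqrt{1-4x}}{2(2+x)}$.
   Context: For $n=1$, $X_1$ consists of the trivial tree (one leaf, no vertex). *)

(* Defs.v *)
From Stdlib Require Import Reals List Lia.
From Coquelicot Require Import Coquelicot.
Open Scope R_scope.

Inductive ptree : Type :=
| Leaf : ptree
| Node : nat -> list ptree -> ptree.

Fixpoint leaves (t : ptree) : nat :=
  match t with
  | Leaf => 1%nat
  | Node _ ch =>
      (fix lv (c : list ptree) : nat :=
         match c with nil => 0%nat | s :: c' => (leaves s + lv c')%nat end) ch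
  end.

(* Membership in X: every vertex with k inputs has k <> 1, k <> 2, and its
   label lies in {1, ..., k-2} (which forces k >= 3). *)
Fixpoint in_X (t : ptree) : Prop :=
  match t with
  | Leaf => True
  | Node l ch =>
      length ch <> 1%nat /\ length ch <> 2%nat /\
      (1 <= l)%nat /\ (l <= length ch - 2)%nat /\
      (fix vl (c : list ptree) : Prop :=
         match c with nil => True | s :: c' => in_X s /\ vl c' end) ch
  end.

(* F is the Fine sequence: sum_{n>=1} F_{n-1} x^n = (1+2x-sqrt(1-4x))/(2(2+x))
   as power series, i.e. for all x in a neighbourhood of 0. *)
Definition fine_gf (F : nat -> R) : Prop :=
  exists r : R, 0 < r /\
    forall x : R, Rabs x < r ->
      is_series (fun n : nat => match n with
                                | O => 0
                                | S m => F m * x ^ n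
                                end)
                ((1 + 2 * x - sqrt (1 - 4 * x)) / (2 * (2 + x))).

(* Main.v *)
Require Import Defs.
From Stdlib Require Import Reals.
From Coquelicot Require Import Coquelicot.
From Stdlib Require Import List Lia Lra Permutation FunctionalExtensionality.
Import List.
Open Scope R_scope.


Fixpoint lsum (l : list ptree) : nat :=
  match l with nil => 0%nat | t :: l' => (leaves t + lsum l')%nat end.

Fixpoint allX (c : list ptree) : Prop :=
  match c with nil => True | s :: c' => in_X s /\ allX c' end.

Lemma leaves_Node x ch : leaves (Node x ch) = lsum ch.
Proof. induction ch as [|a ch IH]; simpl; [reflexivity|]. simpl in IH. rewrite IH. reflexivity. Qed.

Lemma allX_Forall ch : allX ch <-> Forall in_X ch.
Proof. induction ch as [|a ch IH]; simpl.
  - split; auto.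
  - rewrite Forall_cons_iff. tauto. Qed.

Lemma in_X_Node x ch : in_X (Node x ch) <->
  (length ch <> 1%nat /\ length ch <> 2%nat /\ (1 <= x)%nat /\ (x <= length ch - 2)%nat /\ Forall in_X ch).
Proof. rewrite <- allX_Forall. reflexivity. Qed.

Fixpoint ptree_ind2 (P : ptree -> Prop) (HL : P Leaf)
  (HN : forall x ch, Forall P ch -> P (Node x ch)) (t : ptree) : P t :=
  match t with
  | Leaf => HL
  | Node x ch => HN x ch ((fix go (c : list ptree) : Forall P c :=
       match c with nil => @Forall_nil _ P
       | s :: c' => @Forall_cons _ P s c' (ptree_ind2 P HL HN s) (go c') end) ch)
  end.

Lemma lsum_app l1 l2 : lsum (l1 ++ l2) = (lsum l1 + lsum l2)%nat.
Proof. induction l1; simpl; lia. Qed.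

Lemma lsum_ge_len ch : Forall (fun t => 1 <= leaves t)%nat ch -> (length ch <= lsum ch)%nat.
Proof. induction 1; simpl; lia. Qed.

Lemma leaves_pos t : in_X t -> (1 <= leaves t)%nat.
Proof.
  induction t as [|x ch IH] using ptree_ind2; [simpl; lia|].
  intros H. apply in_X_Node in H. destruct H as (h1&h2&h3&h4&h5).
  rewrite leaves_Node.
  assert (Forall (fun t => 1 <= leaves t)%nat ch).
  { rewrite Forall_forall in *. intros y hy. apply IH; auto. }
  apply lsum_ge_len in H. lia.
Qed.

Lemma lsum_ge_len' ch : Forall in_X ch -> (length ch <= lsum ch)%nat.
Proof. intros H; apply lsum_ge_len. rewrite Forall_forall in *. intros; apply leaves_pos; auto. Qed.


Definition mkN (p : list ptree * list ptree) : ptree := Node (length (fst p)) (fst p ++ snd p).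
Definition cpair (p : ptree * list ptree) : list ptree := fst p :: snd p.

Definition L2f (Tk : nat -> list ptree) (Lk : nat -> list (list ptree)) (m : nat) :=
  flat_map (fun j => map cpair (list_prod (Tk j) (Lk (m - j)%nat))) (seq 1 (m - 1)).
Definition Tf (Tk : nat -> list ptree) (Lk : nat -> list (list ptree)) (n : nat) :=
  (if Nat.eqb n 1 then Leaf :: nil else nil) ++
  flat_map (fun i => map mkN (list_prod (Lk i) (L2f Tk Lk (n - i)%nat))) (seq 1 (n - 1)).
Definition Lf (Tk : nat -> list ptree) (Lk : nat -> list (list ptree)) (n : nat) :=
  map (fun t => t :: nil) (Tf Tk Lk n) ++ L2f Tk Lk n.

Fixpoint gen (k : nat) : (nat -> list ptree) * (nat -> list (list ptree)) :=
  match k with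
  | O => (fun _ => nil, fun _ => nil)
  | S k' => (Tf (fst (gen k')) (snd (gen k')), Lf (fst (gen k')) (snd (gen k')))
  end.

Definition GT t n := in_X t /\ leaves t = n.
Definition GL l n := l <> nil /\ Forall in_X l /\ lsum l = n.
Definition GL2 l n := (2 <= length l)%nat /\ Forall in_X l /\ lsum l = n.

Definition good (Tk : nat -> list ptree) (Lk : nat -> list (list ptree)) (N : nat) :=
  forall n, (n < N)%nat -> (forall t, In t (Tk n) <-> GT t n) /\ (forall l, In l (Lk n) <-> GL l n)
     /\ NoDup (Tk n) /\ NoDup (Lk n).

Lemma good_le Tk Lk N M : good Tk Lk N -> (M <= N)%nat -> good Tk Lk M.
Proof. intros H h n hn. apply H. lia. Qed.

Lemma NoDup_flat_map_disj {A B} (f : A -> list B) l : NoDup l -> (forall x, In x l -> NoDup (f x)) ->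
  (forall x y z, In x l -> In y l -> In z (f x) -> In z (f y) -> x = y) -> NoDup (flat_map f l).
Proof.
  induction l as [|a l IH]; simpl; intros Hl Hf Hd; [constructor|].
  apply NoDup_cons_iff in Hl as [Ha Hl].
  apply NoDup_app; auto.
  - apply IH; auto. intros; eapply Hd; eauto.
  - intros z hz hz'. apply in_flat_map in hz' as [y [hy hzy]].
    assert (a = y) by (eapply Hd; eauto). subst. contradiction.
Qed.

Lemma NoDup_prod {A B} (l : list A) (l' : list B) : NoDup l -> NoDup l' -> NoDup (list_prod l l').
Proof.
  intros H H'. rewrite list_prod_as_flat_map. apply NoDup_flat_map_disj; auto.
  - intros x _. apply NoDup_map_NoDup_ForallPairs; auto. intros a b _ _ e. injection e; auto.
  - intros x y z _ _ h1 h2. apply in_map_iff in h1 as [? [<- _]]. apply in_map_iff in h2 as [? [e _]].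
    injection e; auto.
Qed.

Lemma NoDup_map_inj {A B} (f : A -> B) l : (forall x y, f x = f y -> x = y) -> NoDup l -> NoDup (map f l).
Proof. intros Hf H. apply NoDup_map_NoDup_ForallPairs; auto. intros a b _ _; apply Hf. Qed.

Lemma app_inj_len {A} (l1 l2 l1' l2' : list A) : length l1 = length l1' -> l1 ++ l2 = l1' ++ l2' -> l1 = l1' /\ l2 = l2'.
Proof.
  revert l1'; induction l1 as [|a l1 IH]; intros [|b l1'] h e; simpl in *; try discriminate; auto.
  injection e as -> e. injection h as h. destruct (IH l1' h e). subst; auto.
Qed.

Lemma mkN_inj p q : mkN p = mkN q -> p = q.
Proof. destruct p, q; unfold mkN; simpl. intros e; injection e as e1 e2.
  destruct (app_inj_len _ _ _ _ e1 e2); subst; auto. Qed.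

Lemma cpair_inj p q : cpair p = cpair q -> p = q.
Proof. destruct p, q; unfold cpair; simpl. intros e; injection e as -> ->; auto. Qed.

Lemma L2f_spec Tk Lk m : good Tk Lk m ->
  (forall l, In l (L2f Tk Lk m) <-> GL2 l m) /\ NoDup (L2f Tk Lk m).
Proof.
  intros H. split.
  - intros l. unfold L2f. rewrite in_flat_map. split.
    + intros [j [hj hl]]. apply in_seq in hj. apply in_map_iff in hl as [[t l'] [<- hp]].
      apply in_prod_iff in hp as [ht hl']. unfold cpair; simpl.
      destruct (H j ltac:(lia)) as [HT _]. apply HT in ht as [ht1 ht2].
      destruct (H (m - j)%nat ltac:(lia)) as [_ [HL _]]. apply HL in hl' as (h1 & h2 & h3).
      destruct l' as [|u l']; [congruence|].
      split; [simpl; lia|]. split; [constructor; auto|]. simpl in *. lia.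
    + intros (h1 & h2 & h3). destruct l as [|t [|u l']]; simpl in h1; try lia.
      apply Forall_cons_iff in h2 as [ht hr]. pose proof (leaves_pos t ht).
      pose proof (lsum_ge_len' _ hr). simpl in *.
      exists (leaves t). split; [apply in_seq; lia|].
      apply in_map_iff. exists (t, u :: l'). split; [reflexivity|].
      apply in_prod_iff. split.
      * apply (H (leaves t) ltac:(lia)). split; auto.
      * apply (H (m - leaves t)%nat ltac:(lia)). split; [congruence|]. split; auto. simpl. lia.
  - unfold L2f. apply NoDup_flat_map_disj; [apply seq_NoDup| |].
    + intros j hj. apply in_seq in hj. apply NoDup_map_inj; [apply cpair_inj|].
      apply NoDup_prod; [apply (H j ltac:(lia)) | apply (H (m - j)%nat ltac:(lia))].
    + intros x y z hx hy h1 h2. apply in_seq in hx, hy.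
      apply in_map_iff in h1 as [[t1 l1] [e1 hp1]]. apply in_map_iff in h2 as [[t2 l2] [e2 hp2]].
      rewrite <- e2 in e1. apply cpair_inj in e1. injection e1 as -> ->.
      apply in_prod_iff in hp1 as [hp1 _]. apply in_prod_iff in hp2 as [hp2 _].
      apply (H x ltac:(lia)) in hp1. apply (H y ltac:(lia)) in hp2.
      destruct hp1, hp2; congruence.
Qed.


Lemma Tf_spec Tk Lk N : good Tk Lk N ->
  (forall t, In t (Tf Tk Lk N) <-> GT t N) /\ NoDup (Tf Tk Lk N).
Proof.
  intros H. split.
  - intros t. unfold Tf. rewrite in_app_iff, in_flat_map. split.
    + intros [h | [i [hi ht]]].
      * destruct (Nat.eqb N 1) eqn:E; [|destruct h].
        apply Nat.eqb_eq in E. destruct h as [<-|[]]. subst. unfold GT. simpl. auto.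
      * apply in_seq in hi. apply in_map_iff in ht as [[pre suf] [<- hp]].
        apply in_prod_iff in hp as [h1 h2].
        apply (H i ltac:(lia)) in h1 as (p1 & p2 & p3).
        apply (L2f_spec Tk Lk (N - i)%nat (good_le Tk Lk N (N - i)%nat H ltac:(lia))) in h2 as (s1 & s2 & s3).
        unfold mkN; simpl. split.
        -- apply in_X_Node. rewrite length_app.
           assert (Forall in_X (pre ++ suf)) by (apply Forall_app; auto).
           destruct pre as [|x pre]; [congruence|]. simpl in *.
           repeat split; try lia; auto.
        -- rewrite leaves_Node, lsum_app. lia.
    + intros [hX hl]. destruct t as [|x ch].
      * left. simpl in hl. subst. simpl. auto.
      * right. apply in_X_Node in hX as (h1 & h2 & h3 & h4 & h5).
        rewrite leaves_Node in hl.
        set (pre := firstn x ch). set (suf := skipn x ch).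
        assert (Ech : ch = pre ++ suf) by (symmetry; apply firstn_skipn).
        assert (Lp : length pre = x) by (unfold pre; rewrite length_firstn; lia).
        assert (Ls : length suf = (length ch - x)%nat) by (unfold suf; rewrite length_skipn; lia).
        rewrite Ech in h5. apply Forall_app in h5 as [fp fs].
        pose proof (lsum_ge_len' _ fp). pose proof (lsum_ge_len' _ fs).
        rewrite Ech, lsum_app in hl.
        exists (lsum pre). split; [apply in_seq; lia|].
        apply in_map_iff. exists (pre, suf). split.
        -- unfold mkN; simpl. rewrite Lp, <- Ech. reflexivity.
        -- apply in_prod_iff. split.
           ++ apply (H (lsum pre) ltac:(lia)). split; [|split; auto].
              intros e. rewrite e in Lp. simpl in Lp. lia.
           ++ apply (L2f_spec Tk Lk (N - lsum pre)%nat (good_le Tk Lk N (N - lsum pre)%nat H ltac:(lia))).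
              split; [lia|]. split; auto. lia.
  - unfold Tf. apply NoDup_app.
    + destruct (Nat.eqb N 1); repeat constructor; simpl; auto.
    + apply NoDup_flat_map_disj; [apply seq_NoDup| |].
      * intros i hi. apply in_seq in hi. apply NoDup_map_inj; [apply mkN_inj|].
        apply NoDup_prod; [apply (H i ltac:(lia)) | apply (L2f_spec Tk Lk (N - i)%nat (good_le Tk Lk N (N - i)%nat H ltac:(lia)))].
      * intros x y z hx hy h1 h2. apply in_seq in hx, hy.
        apply in_map_iff in h1 as [[p1 s1] [e1 hp1]]. apply in_map_iff in h2 as [[p2 s2] [e2 hp2]].
        rewrite <- e2 in e1. apply mkN_inj in e1. injection e1 as -> ->.
        apply in_prod_iff in hp1 as [hp1 _]. apply in_prod_iff in hp2 as [hp2 _].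
        apply (H x ltac:(lia)) in hp1. apply (H y ltac:(lia)) in hp2.
        destruct hp1 as (_&_&?), hp2 as (_&_&?); congruence.
    + intros a ha hb. destruct (Nat.eqb N 1); [|destruct ha]. destruct ha as [<-|[]].
      apply in_flat_map in hb as [i [_ hb]]. apply in_map_iff in hb as [p [e _]].
      unfold mkN in e. discriminate.
Qed.

Lemma Lf_spec Tk Lk N : good Tk Lk N ->
  (forall l, In l (Lf Tk Lk N) <-> GL l N) /\ NoDup (Lf Tk Lk N).
Proof.
  intros H. destruct (Tf_spec Tk Lk N H) as [HT NT].
  destruct (L2f_spec Tk Lk N H) as [HL NL].
  split.
  - intros l. unfold Lf. rewrite in_app_iff, in_map_iff, HL. split.
    + intros [[t [<- ht]] | (h1 & h2 & h3)].
      * apply HT in ht as [h1 h2]. split; [congruence|]. split; [auto|]. simpl; lia.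
      * split; [intros ->; simpl in h1; lia|]. auto.
    + intros (h1 & h2 & h3). destruct l as [|t [|u l']]; [congruence| |].
      * left. exists t. split; auto. apply HT. apply Forall_cons_iff in h2 as [? _].
        simpl in h3. split; auto. lia.
      * right. split; [simpl; lia|]. auto.
  - unfold Lf. apply NoDup_app; auto.
    + apply NoDup_map_inj; auto. intros x y e; injection e; auto.
    + intros a ha hb. apply in_map_iff in ha as [t [<- _]]. apply HL in hb as [h _]. simpl in h. lia.
Qed.

Lemma gen_good k : good (fst (gen k)) (snd (gen k)) k.
Proof.
  induction k as [|k IH]; intros n hn; [lia|].
  simpl. pose proof (good_le _ _ _ n IH ltac:(lia)) as G.
  destruct (Tf_spec _ _ _ G), (Lf_spec _ _ _ G). tauto.
Qed.

Definition trees n := fst (gen (S n)) n.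
Definition lists n := snd (gen (S n)) n.

Lemma len_eq {A} (l l' : list A) : NoDup l -> NoDup l' -> (forall x, In x l <-> In x l') -> length l = length l'.
Proof. intros. apply Permutation_length. apply NoDup_Permutation; auto. Qed.

Lemma trees_stable k n : (n < k)%nat -> length (fst (gen k) n) = length (trees n).
Proof.
  intros h. destruct (gen_good k n h) as (a1&_&a3&_). destruct (gen_good (S n) n ltac:(lia)) as (b1&_&b3&_).
  apply len_eq; auto. intros x. rewrite a1. unfold trees. rewrite b1. tauto.
Qed.

Lemma lists_stable k n : (n < k)%nat -> length (snd (gen k) n) = length (lists n).
Proof.
  intros h. destruct (gen_good k n h) as (_&a1&_&a3). destruct (gen_good (S n) n ltac:(lia)) as (_&b1&_&b3).
  apply len_eq; auto. intros x. rewrite a1. unfold lists. rewrite b1. tauto.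
Qed.

Lemma trees_0 : trees 0 = nil.
Proof. reflexivity. Qed.

Lemma lists_0 : lists 0 = nil.
Proof. reflexivity. Qed.


Fixpoint mx (u : nat -> R) (n : nat) : R :=
  match n with O => u O | S m => Rmax (mx u m) (u (S m)) end.

Lemma mx_ge u n k : (k <= n)%nat -> u k <= mx u n.
Proof.
  induction n as [|n IH]; intros h.
  - replace k with 0%nat by lia. simpl; lra.
  - simpl. destruct (Nat.eq_dec k (S n)) as [->|ne].
    + apply Rmax_r.
    + eapply Rle_trans; [apply IH; lia| apply Rmax_l].
Qed.

Lemma lim0_bounded u : is_lim_seq u 0 -> exists M, forall n, Rabs (u n) <= M.
Proof.
  intros H. apply is_lim_seq_spec in H. destruct (H (mkposreal 1 Rlt_0_1)) as [N HN].
  exists (Rmax 1 (mx (fun k => Rabs (u k)) N)). intros n.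
  destruct (Compare_dec.le_lt_dec n N) as [h|h].
  - eapply Rle_trans; [apply (mx_ge (fun k => Rabs (u k)) N n h)| apply Rmax_r].
  - specialize (HN n ltac:(lia)). simpl in HN. rewrite Rminus_0_r in HN.
    eapply Rle_trans; [left; apply HN| apply Rmax_l].
Qed.

Lemma radius_of_bound a x : (exists M, forall n, Rabs (a n * x ^ n) <= M) -> Rbar_le (Rabs x) (CV_radius a).
Proof.
  intros [M HM]. destruct (CV_radius_bounded a) as [ub _]. apply ub.
  exists M. intros n. rewrite RPow_abs, Rabs_mult, Rabs_Rabsolu, <- Rabs_mult. apply HM.
Qed.

Lemma radius_of_ex a x : ex_pseries a x -> Rbar_le (Rabs x) (CV_radius a).
Proof.
  intros H. apply radius_of_bound. apply ex_series_lim_0 in H. apply lim0_bounded in H as [M HM].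
  exists M. intros n. specialize (HM n). rewrite pow_n_pow in HM.
  replace (a n * x ^ n) with (scal (x ^ n) (a n)); auto.
  unfold scal; simpl; unfold mult; simpl; ring.
Qed.

Definition fs (a : nat -> R) (N : nat) := forall k, (N < k)%nat -> a k = 0.

Lemma fs_radius a N : fs a N -> CV_radius a = p_infty.
Proof.
  intros H. destruct (CV_radius_bounded a) as [ub _].
  assert (B : forall r : R, Rbar_le (Finite r) (CV_radius a)).
  { intros r. apply ub. exists (mx (fun k => Rabs (a k * r ^ k)) N). intros n.
    destruct (Compare_dec.le_lt_dec n N) as [h|h].
    - apply (mx_ge (fun k => Rabs (a k * r ^ k)) N n h).
    - rewrite H by lia. rewrite Rmult_0_l, Rabs_R0.
      clear. induction N as [|N IH]; simpl; [apply Rabs_pos|].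
      eapply Rle_trans; [apply IH|apply Rmax_l]. }
  destruct (CV_radius a) as [r| |] eqn:E; auto.
  - specialize (B (r + 1)). simpl in B. lra.
  - specialize (B 0). simpl in B. contradiction.
Qed.

Lemma sum_zero f n : (forall i, (i <= n)%nat -> f i = 0) -> sum_f_R0 f n = 0.
Proof.
  intros H. induction n as [|n IH]; simpl.
  - apply H; lia.
  - rewrite IH by (intros; apply H; lia). rewrite H by lia. ring.
Qed.

Lemma fs_mult a b N M : fs a N -> fs b M -> fs (PS_mult a b) (N + M).
Proof.
  intros Ha Hb k hk. unfold PS_mult. apply sum_zero. intros i hi.
  destruct (Compare_dec.le_lt_dec i N) as [h|h].
  - rewrite (Hb (k - i)%nat) by lia. ring.
  - rewrite Ha by lia. ring.
Qed.

Lemma conv_local a b a' b' n : (forall k, (k <= n)%nat -> a k = a' k) -> (forall k, (k <= n)%nat -> b k = b' k) ->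
  PS_mult a b n = PS_mult a' b' n.
Proof.
  intros Ha Hb. unfold PS_mult. apply sum_eq. intros i hi. rewrite Ha, Hb by lia. reflexivity.
Qed.

Definition tr (N : nat) (a : nat -> R) : nat -> R := fun k => if Nat.leb k N then a k else 0.

Lemma tr_fs N a : fs (tr N a) N.
Proof. intros k hk. unfold tr. destruct (Nat.leb_spec k N); [lia|reflexivity]. Qed.

Lemma tr_eq N a k : (k <= N)%nat -> tr N a k = a k.
Proof. intros h. unfold tr. destruct (Nat.leb_spec k N); [reflexivity|lia]. Qed.

Lemma loc_all (P : R -> Prop) : (forall x, P x) -> locally 0 P.
Proof. intros H. exists (mkposreal 1 Rlt_0_1). intros; apply H. Qed.

Lemma fs_lt a N x : fs a N -> Rbar_lt (Rabs x) (CV_radius a).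
Proof. intros H. rewrite (fs_radius a N H). simpl. auto. Qed.

Lemma smul_comm a b : PS_mult a b = PS_mult b a.
Proof.
  apply functional_extensionality. intros n.
  set (A := tr n a). set (B := tr n b).
  assert (fA : fs A n) by apply tr_fs. assert (fB : fs B n) by apply tr_fs.
  rewrite (conv_local a b A B n), (conv_local b a B A n) by (intros; symmetry; apply tr_eq; lia).
  apply PSeries_ext_recip.
  - rewrite (fs_radius _ _ (fs_mult _ _ _ _ fA fB)). simpl; auto.
  - rewrite (fs_radius _ _ (fs_mult _ _ _ _ fB fA)). simpl; auto.
  - apply loc_all. intros x. rewrite !PSeries_mult; try (eapply fs_lt; eauto). ring.
Qed.

Lemma smul_assoc a b c : PS_mult a (PS_mult b c) = PS_mult (PS_mult a b) c.
Proof.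
  apply functional_extensionality. intros n.
  set (A := tr n a). set (B := tr n b). set (C := tr n c).
  assert (fA : fs A n) by apply tr_fs. assert (fB : fs B n) by apply tr_fs. assert (fC : fs C n) by apply tr_fs.
  rewrite (conv_local a (PS_mult b c) A (PS_mult B C) n).
  2: intros; symmetry; apply tr_eq; lia.
  2: intros k hk; apply conv_local; intros; symmetry; apply tr_eq; lia.
  rewrite (conv_local (PS_mult a b) c (PS_mult A B) C n).
  2: intros k hk; apply conv_local; intros; symmetry; apply tr_eq; lia.
  2: intros; symmetry; apply tr_eq; lia.
  pose proof (fs_mult _ _ _ _ fA fB) as fAB. pose proof (fs_mult _ _ _ _ fB fC) as fBC.
  apply PSeries_ext_recip.
  - rewrite (fs_radius _ _ (fs_mult _ _ _ _ fA fBC)). simpl; auto.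
  - rewrite (fs_radius _ _ (fs_mult _ _ _ _ fAB fC)). simpl; auto.
  - apply loc_all. intros x.
    rewrite (PSeries_mult A), (PSeries_mult B), (PSeries_mult _ C), (PSeries_mult A B);
      try (eapply fs_lt; eauto). ring.
Qed.

Definition sadd (a b : nat -> R) : nat -> R := fun n => a n + b n.
Definition sopp (a : nat -> R) : nat -> R := fun n => - a n.
Definition ssub (a b : nat -> R) : nat -> R := sadd a (sopp b).
Definition s0 : nat -> R := fun _ => 0.
Definition s1 : nat -> R := fun n => match n with O => 1 | _ => 0 end.

Lemma s1_mul a : PS_mult s1 a = a.
Proof.
  apply functional_extensionality. intros n. unfold PS_mult.
  assert (forall g m, sum_f_R0 (fun k => s1 k * g k) m = g 0%nat).
  { intros g m. induction m as [|m IH]; simpl; [ring|]. rewrite IH. ring. }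
  rewrite H. rewrite Nat.sub_0_r. reflexivity.
Qed.

Lemma sring : ring_theory s0 s1 sadd PS_mult ssub sopp (@eq (nat -> R)).
Proof.
  constructor; intros; try (apply functional_extensionality; intros; unfold sadd, ssub, sopp, s0; ring).
  - apply s1_mul.
  - apply smul_comm.
  - apply smul_assoc.
  - apply functional_extensionality; intros n. unfold PS_mult, sadd.
    rewrite <- sum_plus. apply sum_eq. intros; ring.
  - reflexivity.
Qed.

Add Ring sring : sring.


Definition X : nat -> R := fun n => if Nat.eqb n 1 then 1 else 0.

Definition Qf (s : nat -> R) : nat -> R :=
  ssub (sadd (ssub (ssub s (sadd (PS_mult s s) (PS_mult s s))) X) (sadd (PS_mult X s) (PS_mult X s)))
       (PS_mult X (PS_mult s s)).

Lemma quad_of_system T P : T = sadd X (PS_mult P (PS_mult T P)) -> P = sadd T (PS_mult T P) -> Qf T = s0.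
Proof.
  intros H1 H2.
  assert (E1 : ssub T X = PS_mult P (PS_mult T P)) by (rewrite H1 at 1; ring).
  assert (E2 : ssub P (PS_mult T P) = T) by (rewrite H2 at 1; ring).
  unfold Qf.
  transitivity (ssub (PS_mult (PS_mult (ssub T X) (ssub s1 T)) (ssub s1 T)) (PS_mult T (PS_mult T T))).
  { ring. }
  rewrite E1.
  transitivity (ssub (PS_mult T (PS_mult (ssub P (PS_mult T P)) (ssub P (PS_mult T P)))) (PS_mult T (PS_mult T T))).
  { ring. }
  rewrite E2. ring.
Qed.

Lemma Qf_coef s n : Qf s = s0 ->
  s n = (PS_mult s s n + PS_mult s s n) + X n - (PS_mult X s n + PS_mult X s n) + PS_mult X (PS_mult s s) n.
Proof.
  intros H. apply (f_equal (fun f => f n)) in H. unfold Qf, ssub, sadd, sopp, s0 in H. lra.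
Qed.

Lemma conv_strict a b a' b' n : a 0%nat = 0 -> a' 0%nat = 0 -> b 0%nat = 0 -> b' 0%nat = 0 ->
  (forall k, (k < n)%nat -> a k = a' k /\ b k = b' k) -> PS_mult a b n = PS_mult a' b' n.
Proof.
  intros ha ha' hb hb' H. unfold PS_mult. apply sum_eq. intros i hi.
  destruct (Nat.eq_dec i 0) as [->|n0].
  - rewrite ha, ha'. ring.
  - destruct (Nat.eq_dec i n) as [->|n1].
    + rewrite Nat.sub_diag, hb, hb'. ring.
    + destruct (H i ltac:(lia)) as [e1 _]. destruct (H (n - i)%nat ltac:(lia)) as [_ e2].
      rewrite e1, e2. reflexivity.
Qed.

Lemma Qf_uniq s s' : s 0%nat = 0 -> s' 0%nat = 0 -> Qf s = s0 -> Qf s' = s0 -> forall n, s n = s' n.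
Proof.
  intros h h' Q Q' n. induction n as [n IH] using (well_founded_induction Wf_nat.lt_wf).
  assert (X0 : X 0%nat = 0) by reflexivity.
  assert (ss0 : forall t, t 0%nat = 0 -> PS_mult t t 0%nat = 0).
  { intros t ht. unfold PS_mult. simpl. rewrite ht. ring. }
  assert (Hss : forall m, (m <= n)%nat -> PS_mult s s m = PS_mult s' s' m).
  { intros m hm. apply conv_strict; auto. intros k hk. split; apply IH; lia. }
  rewrite (Qf_coef s n Q), (Qf_coef s' n Q').
  rewrite (Hss n (le_n n)).
  assert (E1 : PS_mult X s n = PS_mult X s' n).
  { apply conv_strict; try (intros k hk; split; [reflexivity|apply IH; lia]); auto. }
  assert (E2 : PS_mult X (PS_mult s s) n = PS_mult X (PS_mult s' s') n).
  { apply conv_strict; try (intros k hk; split; [reflexivity|apply Hss; lia]); auto. }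
  rewrite E1, E2. reflexivity.
Qed.


Lemma fold_plus_c c l : fold_right Rplus c l = fold_right Rplus 0 l + c.
Proof. induction l; simpl; [ring|]. rewrite IHl. ring. Qed.

Lemma sum_list f n : sum_f_R0 f n = fold_right Rplus 0 (map f (seq 0%nat (S n))).
Proof.
  induction n as [|n IH]; [simpl; ring|].
  change (sum_f_R0 f (S n)) with (sum_f_R0 f n + f (S n)).
  rewrite IH. rewrite (seq_S (S n) 0%nat). rewrite map_app, fold_right_app. simpl.
  rewrite (fold_plus_c (f (S n) + 0)). simpl. ring.
Qed.

Lemma INR_list_sum {A} (g : A -> nat) l : INR (list_sum (map g l)) = fold_right Rplus 0 (map (fun x => INR (g x)) l).
Proof. induction l; simpl; [reflexivity|]. rewrite plus_INR, IHl. reflexivity. Qed.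

Lemma conv_list (u v : nat -> nat) m : u 0%nat = 0%nat -> v 0%nat = 0%nat ->
  INR (list_sum (map (fun j => u j * v (m - j))%nat (seq 1%nat (m - 1)))) =
  PS_mult (fun k => INR (u k)) (fun k => INR (v k)) m.
Proof.
  intros hu hv. unfold PS_mult. rewrite sum_list, INR_list_sum.
  destruct m as [|m].
  - simpl. rewrite hu. simpl. ring.
  - replace (S m - 1)%nat with m by lia. change (seq 0%nat (S (S m))) with (0%nat :: seq 1%nat (S m)).
    rewrite (seq_S m 1%nat). cbn [map fold_right]. rewrite !map_app. rewrite !fold_right_app. cbn [map fold_right].
    rewrite (fold_plus_c (_ + 0)).
    replace (S m - (1 + m))%nat with 0%nat by lia. rewrite Nat.sub_0_r, hu, hv.
    rewrite (map_ext_in (fun x => INR (u x * v (S m - x))%nat) (fun k => INR (u k) * INR (v (S m - k)%nat))).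
    + simpl INR. ring.
    + intros; apply mult_INR.
Qed.

Definition Ts : nat -> R := fun k => INR (length (trees k)).
Definition Ps : nat -> R := fun k => INR (length (lists k)).

Definition Wn (m : nat) : nat := list_sum (map (fun j => length (trees j) * length (lists (m - j)))%nat (seq 1%nat (m - 1))).

Lemma L2f_len n m : (m <= n)%nat -> length (L2f (fst (gen n)) (snd (gen n)) m) = Wn m.
Proof.
  intros h. unfold L2f, Wn. rewrite length_flat_map. f_equal. apply map_ext_in.
  intros j hj. apply in_seq in hj. rewrite length_map, length_prod.
  rewrite trees_stable, lists_stable by lia. reflexivity.
Qed.

Lemma Wn_conv : (fun k => INR (Wn k)) = PS_mult Ts Ps.
Proof.
  apply functional_extensionality. intros m. unfold Wn.
  apply (conv_list (fun j => length (trees j)) (fun j => length (lists j)) m); reflexivity.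
Qed.

Lemma Ps_eq : Ps = sadd Ts (PS_mult Ts Ps).
Proof.
  apply functional_extensionality. intros n. unfold sadd.
  rewrite <- Wn_conv. unfold Ps at 1.
  change (lists n) with (Lf (fst (gen n)) (snd (gen n)) n).
  unfold Lf. rewrite length_app, length_map, plus_INR, L2f_len by lia. reflexivity.
Qed.

Lemma Ts_eq : Ts = sadd X (PS_mult Ps (PS_mult Ts Ps)).
Proof.
  apply functional_extensionality. intros n. unfold sadd.
  rewrite <- Wn_conv. unfold Ts at 1.
  change (trees n) with (Tf (fst (gen n)) (snd (gen n)) n).
  unfold Tf. rewrite length_app, plus_INR. f_equal.
  - unfold X. destruct (Nat.eqb n 1); reflexivity.
  - rewrite length_flat_map.
    rewrite (map_ext_in _ (fun i => length (lists i) * Wn (n - i))%nat).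
    + apply (conv_list (fun j => length (lists j)) Wn n); reflexivity.
    + intros i hi. apply in_seq in hi. rewrite length_map, length_prod.
      rewrite lists_stable, L2f_len by lia. reflexivity.
Qed.

Lemma Ts_quad : Qf Ts = s0.
Proof. apply (quad_of_system Ts Ps Ts_eq Ps_eq). Qed.


Lemma isp_add a b x la lb : is_pseries a x la -> is_pseries b x lb -> is_pseries (sadd a b) x (la + lb).
Proof. intros H1 H2. exact (is_pseries_plus a b x la lb H1 H2). Qed.

Lemma isp_opp a x la : is_pseries a x la -> is_pseries (sopp a) x (- la).
Proof. intros H1. exact (is_pseries_opp a x la H1). Qed.

Lemma isp_sub a b x la lb : is_pseries a x la -> is_pseries b x lb -> is_pseries (ssub a b) x (la - lb).
Proof. intros. apply isp_add; auto. apply isp_opp; auto. Qed.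

Lemma X_mul u : PS_mult X u = PS_incr_1 u.
Proof.
  apply functional_extensionality. intros n. unfold PS_mult.
  assert (H : forall g m, sum_f_R0 (fun k => X k * g k) m = match m with O => 0 | S _ => g 1%nat end).
  { intros g m. induction m as [|m IH].
    - simpl. unfold X. simpl. ring.
    - change (sum_f_R0 (fun k => X k * g k) (S m)) with (sum_f_R0 (fun k => X k * g k) m + X (S m) * g (S m)).
      rewrite IH. destruct m as [|m]; unfold X; simpl; ring. }
  rewrite H. destruct n as [|n]; simpl; [reflexivity|]. rewrite Nat.sub_0_r. reflexivity.
Qed.

Lemma isp_X u x l : is_pseries u x l -> is_pseries (PS_mult X u) x (x * l).
Proof. intros H. rewrite X_mul. exact (is_pseries_incr_1 u x l H). Qed.

Lemma s1_pser x : is_pseries s1 x 1.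
Proof.
  apply is_pseries_R, is_series_Reals. intros eps heps. exists 0%nat. intros n _.
  assert (E : sum_f_R0 (fun n => s1 n * x ^ n) n = 1).
  { induction n as [|n IH]; simpl in *; [ring|]. rewrite IH. ring. }
  unfold R_dist. rewrite E. rewrite Rminus_diag, Rabs_R0. auto.
Qed.

Lemma X_pser x : is_pseries X x x.
Proof.
  replace X with (PS_mult X s1).
  - replace x with (x * 1) at 2 by ring. apply isp_X, s1_pser.
  - rewrite smul_comm. apply s1_mul.
Qed.

Definition fphi (x : R) := (1 + 2 * x - sqrt (1 - 4 * x)) / (2 * (2 + x)).

Lemma fphi_quad x : Rabs x < 1/4 ->
  fphi x - (fphi x * fphi x + fphi x * fphi x) - x + (x * fphi x + x * fphi x) - x * (fphi x * fphi x) = 0.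
Proof.
  intros h. apply Rabs_def2 in h as [h1 h2].
  assert (S : sqrt (1 - 4 * x) * sqrt (1 - 4 * x) = 1 - 4 * x) by (apply sqrt_sqrt; lra).
  unfold fphi. set (s := sqrt (1 - 4 * x)) in *.
  field_simplify; [|lra].
  assert (S2 : s ^ 2 = 1 - 4 * x) by (rewrite <- S; ring). rewrite S2.
  field. nra.
Qed.


Definition aF (F : nat -> R) : nat -> R := fun n => match n with O => 0 | S m => F m end.

Lemma radius_lt a r : (forall x, Rabs x < r -> ex_pseries a x) -> forall x, Rabs x < r -> Rbar_lt (Rabs x) (CV_radius a).
Proof.
  intros H x hx. pose proof (Rabs_pos x) as P.
  assert (hy : Rabs ((Rabs x + r) / 2) < r). { rewrite (Rabs_pos_eq ((Rabs x + r) / 2)); lra. }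
  pose proof (radius_of_ex a _ (H _ hy)) as L.
  assert (Rabs x < Rabs ((Rabs x + r) / 2)). { rewrite (Rabs_pos_eq ((Rabs x + r) / 2)); lra. }
  destruct (CV_radius a) as [c| |]; simpl in *; try tauto. lra.
Qed.

Lemma aF_quad F : fine_gf F -> Qf (aF F) = s0.
Proof.
  intros [r [hr HF]].
  set (a := aF F).
  assert (Ha : forall x, Rabs x < r -> is_pseries a x (fphi x)).
  { intros x hx. apply is_pseries_R. eapply is_series_ext; [|apply (HF x hx)].
    intros [|n]; simpl; ring. }
  assert (Ra : forall x, Rabs x < r -> Rbar_lt (Rabs x) (CV_radius a)).
  { apply radius_lt. intros x hx. eexists; apply Ha; auto. }
  set (r' := Rmin r (1/4)).
  assert (hr' : 0 < r') by (unfold r'; apply Rmin_glb_lt; lra).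
  assert (HQ : forall x, Rabs x < r' -> is_pseries (Qf a) x 0).
  { intros x hx.
    assert (h1 : Rabs x < r) by (eapply Rlt_le_trans; [apply hx| apply Rmin_l]).
    assert (h2 : Rabs x < 1/4) by (eapply Rlt_le_trans; [apply hx| apply Rmin_r]).
    rewrite <- (fphi_quad x h2).
    pose proof (Ha x h1) as A. pose proof (Ra x h1) as RA.
    pose proof (is_pseries_mult a a x _ _ A A RA RA) as AA.
    unfold Qf. apply isp_sub; [apply isp_add; [apply isp_sub; [apply isp_sub|]|]|].
    - exact A.
    - apply isp_add; exact AA.
    - apply X_pser.
    - apply isp_add; apply isp_X; exact A.
    - apply isp_X; exact AA. }
  apply functional_extensionality. intros n.
  apply PSeries_ext_recip.
  - assert (h : Rabs (r' / 2) < r') by (rewrite Rabs_pos_eq; lra).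
    pose proof (radius_of_ex (Qf a) (r'/2) (ex_intro _ _ (HQ _ h))) as L.
    rewrite Rabs_pos_eq in L by lra.
    destruct (CV_radius (Qf a)); simpl in *; try tauto; lra.
  - unfold s0. rewrite CV_radius_const_0. simpl; auto.
  - exists (mkposreal r' hr'). intros y hy.
    assert (hy' : Rabs y < r').
    { change (Rabs (minus y 0) < r') in hy. unfold minus, plus, opp in hy; simpl in hy.
      unfold Rminus in hy. rewrite Ropp_0, Rplus_0_r in hy. exact hy. }
    rewrite (is_pseries_unique _ _ _ (HQ y hy')).
    symmetry. apply is_pseries_unique. apply is_pseries_R.
    unfold s0. eapply is_series_ext; [|apply is_series_Reals; intros eps he; exists 0%nat; intros m _;
      unfold R_dist; rewrite Rminus_0_r; instantiate (1 := fun _ => 0);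
      assert (sum_f_R0 (fun _ => 0) m = 0) by (induction m; simpl; [ring| rewrite IHm; ring]);
      rewrite H, Rabs_R0; auto].
    intros; simpl; ring.
Qed.

Theorem corollary2p4 (F : nat -> R) (HF : fine_gf F) (n : nat) (hn : (1 <= n)%nat) :
  exists Xn : list ptree,
    NoDup Xn /\
    (forall t : ptree, In t Xn <-> (in_X t /\ leaves t = n)) /\
    INR (length Xn) = F (n - 1)%nat.
Proof.
  exists (trees n).
  destruct (gen_good (S n) n ltac:(lia)) as (h1 & _ & h3 & _).
  split; [exact h3|]. split; [exact h1|].
  assert (E : forall m, aF F m = Ts m).
  { apply Qf_uniq; [reflexivity|reflexivity| apply aF_quad; exact HF | apply Ts_quad]. }
  specialize (E n). unfold Ts in E. rewrite <- E.
  destruct n as [|m]; [lia|]. simpl. rewrite Nat.sub_0_r. reflexivity.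
Qed.
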